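(* Let $\rho$ be an $i$-polymatroid on a finite set $E$ and let $\rho^*$ be its $i$-dual. If $M_1,\dots,M_i$ are matroids on $E$ with $\rho=r_{M_1}+\cdots+r_{M_i}$, then $\rho^*=r_{M_1^*}+\cdots+r_{M_i^*}$. More generally, if $k\ge i$ and $M_1,\dots,M_k$ are matroids on $E$ with $\rho=r_{M_1}+\cdots+r_{M_k}$, then there are matroids $M'_1,\dots,M'_k$ on $E$ with $\rho^*=r_{M'_1}+\cdots+r_{M'_k}$ such that, for every $s\in[k]$, the matroid obtained from $M'_s$ by deleting its loops and coloops is the dual of the matroid obtained from $M_s$ by deleting its loops and coloops. Consequently, if $\min(\chi(\rho),\chi(\rho^* ))\ge i$, then $\chi(\rho)=\chi(\rho^* )$.
   Context: A polymatroid on $E$ is a function $\rho:2^E\to\mathbb{Z}$ that is normalized, non-decreasing and submodular; it is an $i$-polymatroid if $\rho(\{e\})\le i$ for all $e\in E$. The $i$-dual of an $i$-polymatroid $\rho$ is $\rho^*(X)=i|X|-\rho(E)+\rho(E-X)$ for $X\subseteq E$. $M^*$ denotes the dual matroid. The chromatic number $\chi(\rho)$ is the least positive integer $k$ such that $\rho=r_{M_1}+\cdots+r_{M_k}$ for some matroids $M_1,\dots,M_k$ on $E$, and $\infty$ if there is no such $k$. *)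

(* Defs.v *)
From mathcomp Require Import all_boot all_order all_algebra.
Set Implicit Arguments. Unset Strict Implicit. Unset Printing Implicit Defensive.
Import Order.TTheory GRing.Theory Num.Theory.
Local Open Scope ring_scope.

Section Poly.
Variable E : finType.

Definition polymatroid (rho : {set E} -> int) : Prop :=
  [/\ rho set0 = 0,
      (forall X Y : {set E}, X \subset Y -> rho X <= rho Y) &
      (forall X Y : {set E}, rho (X :|: Y) + rho (X :&: Y) <= rho X + rho Y)].

Definition ipolymatroid (i : nat) (rho : {set E} -> int) : Prop :=
  polymatroid rho /\ (forall e : E, rho [set e] <= i%:Z).

Definition idual (i : nat) (rho : {set E} -> int) (X : {set E}) : int :=
  (i * #|X|)%:Z - rho setT + rho (~: X).

Record matroid := Matroid { mrank : {set E} -> int ; mrank_ax : ipolymatroid 1 mrank }.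

Definition dual_rank (M : matroid) : {set E} -> int := idual 1 (mrank M).

Definition loops (M : matroid) : {set E} := [set e | mrank M [set e] == 0].
Definition coloops (M : matroid) : {set E} :=
  [set e | mrank M (~: [set e]) < mrank M setT].

(* ground set of M \ (loops ∪ coloops) *)
Definition core (M : matroid) : {set E} := ~: (loops M :|: coloops M).

(* the matroid M' \ (loops ∪ coloops) is the dual of M \ (loops ∪ coloops):
   same ground set G, and r_{M'}(X) = |X| - r_M(G) + r_M(G - X) for X ⊆ G *)
Definition core_dual (M' M : matroid) : Prop :=
  core M' = core M /\
  forall X : {set E}, X \subset core M ->
    mrank M' X = #|X|%:Z - mrank M (core M) + mrank M (core M :\: X).

Definition colorable (rho : {set E} -> int) (k : nat) : Prop :=
  exists M : 'I_k -> matroid, forall X : {set E}, rho X = \sum_(s < k) mrank (M s) X.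

(* is_chi rho c : the chromatic number of rho is c (None = infinity) *)
Definition is_chi (rho : {set E} -> int) (c : option nat) : Prop :=
  match c with
  | Some k => (0 < k)%N /\ colorable rho k /\
              (forall k', (0 < k')%N -> colorable rho k' -> (k <= k')%N)
  | None => forall k', (0 < k')%N -> ~ colorable rho k'
  end.

Definition le_ext (i : nat) (c : option nat) : Prop :=
  match c with Some k => (i <= k)%N | None => True end.

End Poly.

(* Main.v *)
Require Import Defs.
From mathcomp Require Import all_boot all_order all_algebra.
From mathcomp Require Import zify.
Set Implicit Arguments. Unset Strict Implicit. Unset Printing Implicit Defensive.
Import Order.TTheory GRing.Theory Num.Theory.
Local Open Scope ring_scope.

Section Aux.
Variable E : finType.
Implicit Types (X Y Z S : {set E}).

Section PolyLemmas.
Variable r : {set E} -> int.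
Hypothesis hr : polymatroid r.

Lemma pr0 : r set0 = 0. Proof. by case: hr. Qed.
Lemma prmono X Y : X \subset Y -> r X <= r Y. Proof. by case: hr => _ h _; apply: h. Qed.
Lemma prsub X Y : r (X :|: Y) + r (X :&: Y) <= r X + r Y. Proof. by case: hr => _ _ h; apply: h. Qed.
Lemma prge0 X : 0 <= r X. Proof. rewrite -pr0; apply: prmono; exact: sub0set. Qed.

Lemma prsubadd Z S : r (Z :|: S) <= r Z + \sum_(e in S) r [set e].
Proof.
move Hn: #|S| => n; elim: n S Hn => [|n IH] S Hn.
  move/eqP: Hn; rewrite cards_eq0 => /eqP ->.
  by rewrite setU0 big_set0 addr0.
have : (0 < #|S|)%N by rewrite Hn.
case/card_gt0P => x xS.
have -> : \sum_(e in S) r [set e] = r [set x] + \sum_(e in S :\ x) r [set e].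
  by rewrite (big_setD1 x xS).
rewrite (cardsD1 x S) xS in Hn.
have IH' := IH (S :\ x) ltac:(lia).
have -> : Z :|: S = (Z :|: (S :\ x)) :|: [set x].
  by rewrite -setUA [_ :|: [set x]]setUC setD1K.
have h1 := prsub (Z :|: (S :\ x)) [set x].
have h2 := prge0 ((Z :|: (S :\ x)) :&: [set x]).
lia.
Qed.
End PolyLemmas.

Section MatLemmas.
Variable M : matroid E.
Local Notation r := (mrank M).
Lemma hM : polymatroid r. Proof. by case: (mrank_ax M). Qed.
Lemma r1 e : r [set e] <= 1. Proof. by case: (mrank_ax M). Qed.
Lemma r0 : r set0 = 0. Proof. exact: pr0 hM. Qed.
Lemma rmono X Y : X \subset Y -> r X <= r Y. Proof. move=> h. exact: (prmono hM h). Qed.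
Lemma rsub X Y : r (X :|: Y) + r (X :&: Y) <= r X + r Y. Proof. exact: (prsub hM X Y). Qed.
Lemma rge0 X : 0 <= r X. Proof. exact: (prge0 hM X). Qed.

Lemma rsubcard Z S : r (Z :|: S) <= r Z + #|S|%:Z.
Proof.
apply: le_trans (prsubadd hM Z S) _.
rewrite lerD2l.
apply: le_trans (_ : \sum_(e in S) (1:int) <= _).
  by apply: ler_sum => e _; apply: r1.
by rewrite sumr_const -natz.
Qed.

Lemma loop_union Z S : S \subset loops M -> r (Z :|: S) = r Z.
Proof.
move=> hS; apply/eqP; rewrite eq_le; apply/andP; split; last first.
  by apply: rmono; apply: subsetUl.
apply: le_trans (prsubadd hM Z S) _.
rewrite big1 ?addr0 //.
by move=> e /(subsetP hS); rewrite inE => /eqP.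
Qed.

Lemma loop_not_coloop e : e \in loops M -> e \notin coloops M.
Proof.
rewrite !inE => /eqP h. rewrite -leNgt.
have := rsub (~: [set e]) [set e].
have -> : ~: [set e] :|: [set e] = setT by rewrite setUC setUCr.
have -> : ~: [set e] :&: [set e] = set0 by rewrite setIC setICr.
rewrite r0 h; lia.
Qed.

Lemma coloop_add Y e : e \in coloops M -> e \notin Y -> r (Y :|: [set e]) = r Y + 1.
Proof.
rewrite inE => hc heY.
have h1 := rsub (Y :|: [set e]) (~: [set e]).
have E1 : (Y :|: [set e]) :|: ~: [set e] = setT.
  by apply/setP => x; rewrite !inE; case: (x == e); rewrite ?orbT.
have E2 : (Y :|: [set e]) :&: ~: [set e] = Y.
  apply/setP => x; rewrite !inE.
  by case: (x =P e) => [->|_]; rewrite ?(negbTE heY) /= ?andbT ?andbF ?orbF.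
have h2 := rsub Y [set e].
have E3 : Y :&: [set e] = set0.
  apply/setP => x; rewrite !inE.
  by case: (x =P e) => [->|_]; rewrite ?(negbTE heY) /= ?andbT ?andbF ?orbF.
rewrite E1 E2 in h1. rewrite E3 r0 in h2.
have := r1 e. lia.
Qed.

Lemma coloops_union Y S : S \subset coloops M -> (forall x, x \in S -> x \notin Y) ->
  r (Y :|: S) = r Y + #|S|%:Z.
Proof.
move Hn: #|S| => n; elim: n S Hn => [|n IH] S Hn hS hd.
  move/eqP: Hn; rewrite cards_eq0 => /eqP ->.
  by rewrite setU0 addr0.
have : (0 < #|S|)%N by rewrite Hn.
case/card_gt0P => x xS.
rewrite (cardsD1 x S) xS in Hn.
have hS' : S :\ x \subset coloops M.
  by apply: subset_trans hS; apply: subsetDl.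
have hd' : forall y, y \in S :\ x -> y \notin Y.
  by move=> y; rewrite inE => /andP [_ /hd].
have IH' := IH (S :\ x) ltac:(lia) hS' hd'.
have -> : Y :|: S = (Y :|: (S :\ x)) :|: [set x].
  by rewrite -setUA [_ :|: [set x]]setUC setD1K.
rewrite coloop_add.
- rewrite IH'; lia.
- exact: (subsetP hS).
- by rewrite !inE negb_or hd //= eqxx.
Qed.

Lemma decomp Y : r Y = r (Y :&: core M) + #|Y :&: coloops M|%:Z.
Proof.
have HY : Y = ((Y :&: core M) :|: (Y :&: coloops M)) :|: (Y :&: loops M) :> {set E}.
  apply/setP => x; rewrite /core !(in_setC, in_setU, in_setI).
  by case: (x \in Y); case: (x \in loops M); case: (x \in coloops M).
rewrite {1}HY loop_union; last by apply: subsetIr.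
rewrite coloops_union //; last first.
- move=> x; rewrite /core !(in_setC, in_setU, in_setI) => /andP [_ ->]; rewrite negb_or; case: (x \in Y) => //=; by case: (x \in loops M).
- by apply: subsetIr.
Qed.

Lemma core_notcoloop e : e \in core M -> e \notin coloops M.
Proof. by rewrite /core !(in_setC, in_setU, in_setI) negb_or => /andP [_]. Qed.
Lemma core_notloop e : e \in core M -> e \notin loops M.
Proof. by rewrite /core !(in_setC, in_setU, in_setI) negb_or => /andP []. Qed.

Lemma core_full e : e \in core M -> r (core M :\ e) = r (core M).
Proof.
move=> he.
have hK := core_notcoloop he.
have d1 := decomp (~: [set e]).
have d2 := decomp setT.
rewrite !setTI in d2.
have E1 : ~: [set e] :&: core M = core M :\ e by rewrite setIC setDE.
have E2 : ~: [set e] :&: coloops M = coloops M.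
  apply/setP => x; rewrite in_setI in_setC in_set1; case: (x =P e) => [->|_] //=.
  by rewrite (negbTE hK).
rewrite E1 E2 in d1.
move: hK; rewrite inE -leNgt => hK.
have hm : r (core M :\ e) <= r (core M) by apply: rmono; apply: subsetDl.
lia.
Qed.

Lemma tdiff X : r setT - r (~: X) = r (core M) - r (core M :\: X) + #|X :&: coloops M|%:Z.
Proof.
have d1 := decomp (~: X).
have d2 := decomp setT.
rewrite !setTI in d2.
have E1 : ~: X :&: core M = core M :\: X by rewrite setIC setDE.

rewrite E1 in d1.
have := cardsID X (coloops M).
have -> : coloops M :&: X = X :&: coloops M by rewrite setIC.
have -> : coloops M :\: X = ~: X :&: coloops M by rewrite setDE setIC.
lia.
Qed.
End MatLemmas.

Definition gfun (M : matroid E) (A X : {set E}) : int :=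
  (#|X :&: core M|)%:Z - mrank M (core M) + mrank M (core M :\: X) + (#|X :&: A|)%:Z.

Section G.
Variables (M : matroid E) (A : {set E}).
Hypothesis hA : A \subset ~: core M.
Local Notation r := (mrank M).
Local Notation C := (core M).

Lemma notA e : e \in C -> e \notin A.
Proof.
move=> he; apply/negP => /(subsetP hA); by rewrite in_setC he.
Qed.

Lemma g_poly : polymatroid (gfun M A).
Proof.
split.
- rewrite /gfun !set0I cards0 setD0; lia.
- move=> X Y sXY; rewrite /gfun.
  have h1 : (#|X :&: A| <= #|Y :&: A|)%N by apply: subset_leq_card; apply: setSI.
  set S := (Y :&: C) :\: X.
  have hU : (C :\: Y) :|: S = C :\: X.
    apply/setP => x; rewrite !(in_setD, in_setI, in_setU).
    have := subsetP sXY x.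
    by case: (x \in X); case: (x \in Y); case: (x \in C) => //= ->.
  have h2 := rsubcard M (C :\: Y) S. rewrite hU in h2.
  have h3 := cardsID X (Y :&: C).
  have h4 : (Y :&: C) :&: X = X :&: C.
    apply/setP => x; rewrite !(in_setD, in_setI, in_setU).
    have := subsetP sXY x.
    by case: (x \in X); case: (x \in Y); case: (x \in C) => //= ->.
  rewrite h4 in h3. rewrite /S in h2. lia.
- move=> X Y; rewrite /gfun.
  have c1 := cardsUI (X :&: C) (Y :&: C).
  have c2 := cardsUI (X :&: A) (Y :&: A).
  have e1 : (X :|: Y) :&: C = (X :&: C) :|: (Y :&: C) by rewrite setIUl.
  have e1' : (X :|: Y) :&: A = (X :&: A) :|: (Y :&: A) by rewrite setIUl.
  have e2 : (X :&: Y) :&: C = (X :&: C) :&: (Y :&: C).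
    by apply/setP => x; rewrite !in_setI; case: (x \in X); case: (x \in Y); case: (x \in C).
  have e2' : (X :&: Y) :&: A = (X :&: A) :&: (Y :&: A).
    by apply/setP => x; rewrite !in_setI; case: (x \in X); case: (x \in Y); case: (x \in A).
  have e3 : C :\: (X :|: Y) = (C :\: X) :&: (C :\: Y) by rewrite setDUr.
  have e4 : C :\: (X :&: Y) = (C :\: X) :|: (C :\: Y) by rewrite setDIr.
  rewrite e1 e2 e1' e2' e3 e4.
  have := rsub M (C :\: X) (C :\: Y). lia.
Qed.

Lemma g_single e : gfun M A [set e] <= 1.
Proof.
rewrite /gfun; case: (boolP (e \in C)) => he.
- have -> : [set e] :&: C = [set e].
    by apply/setP => x; rewrite in_setI in_set1; case: (x =P e) => // ->.
  have -> : [set e] :&: A = set0.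
    apply/setP => x; rewrite in_setI in_set1 in_set0; case: (x =P e) => // ->.
    by rewrite (negbTE (notA he)).
  have := rmono M (subsetDl C [set e]).
  rewrite cards1 cards0; lia.
- have -> : [set e] :&: C = set0.
    apply/setP => x; rewrite in_setI in_set1 in_set0; case: (x =P e) => // ->.
    by rewrite (negbTE he).
  have -> : C :\: [set e] = C.
    apply/setP => x; rewrite in_setD in_set1; case: (x =P e) => // ->.
    by rewrite (negbTE he).
  have : (#|[set e] :&: A| <= 1)%N.
    by rewrite -(cards1 e); apply: subset_leq_card; apply: subsetIl.
  rewrite cards0; lia.
Qed.

Lemma g_ipoly : ipolymatroid 1 (gfun M A).
Proof. split; [exact: g_poly | exact: g_single]. Qed.

Definition mkM : matroid E := Matroid g_ipoly.

Lemma mkM_core : core mkM = C.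
Proof.
apply/setP => e.
have [b Hb] : {b | (e \in C) = b} by exists (e \in C).
rewrite Hb.
rewrite in_setC in_setU /loops /coloops !inE /= /gfun.
have gT : (#|[set: E] :&: C|%:Z - r C + r (C :\: [set: E]) + #|[set: E] :&: A|%:Z)
   = #|C|%:Z - r C + #|A|%:Z.
  by rewrite !setTI setDT r0 addr0.
rewrite gT.
case: b Hb => he; last move/negbT: he => he.
- have -> : [set e] :&: C = [set e].
    by apply/setP => x; rewrite in_setI in_set1; case: (x =P e) => // ->.
  have -> : [set e] :&: A = set0.
    apply/setP => x; rewrite in_setI in_set1 in_set0; case: (x =P e) => // ->.
    by rewrite (negbTE (notA he)).
  rewrite core_full // cards1 cards0.
  have -> : ~: [set e] :&: C = C :\ e by rewrite setIC setDE.
  have -> : C :\: ~: [set e] = [set e].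
    apply/setP => x; rewrite in_setD in_setC in_set1 negbK.
    by case: (x =P e) => [->|_]; rewrite ?he ?andbF.
  have -> : ~: [set e] :&: A = A.
    apply/setP => x; rewrite in_setI in_setC in_set1; case: (x =P e) => // ->.
    by rewrite (negbTE (notA he)).
  have hc := cardsD1 e C. rewrite he in hc.
  have hl := core_notloop he. rewrite inE in hl.
  have h1 := r1 M e. have h0 := rge0 M [set e].
  have -> : r [set e] = 1.
    have hne : r [set e] <> 0 by move=> h; rewrite h eqxx in hl.
    lia.
  rewrite /= in hc.
  apply/negP => /orP [/eqP|] H; lia.
- have -> : [set e] :&: C = set0.
    apply/setP => x; rewrite in_setI in_set1 in_set0; case: (x =P e) => // ->.
    by rewrite (negbTE he).
  have -> : C :\: [set e] = C.
    apply/setP => x; rewrite in_setD in_set1; case: (x =P e) => // ->.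
    by rewrite (negbTE he).
  have -> : ~: [set e] :&: C = C.
    apply/setP => x; rewrite in_setI in_setC in_set1; case: (x =P e) => // ->.
    by rewrite (negbTE he).
  have -> : C :\: ~: [set e] = set0.
    apply/setP => x; rewrite in_setD in_setC in_set1 negbK in_set0.
    by case: (x =P e) => [->|_]; rewrite ?(negbTE he) ?andbF.
  have -> : ~: [set e] :&: A = A :\ e by rewrite setIC setDE.
  have hc := cardsD1 e A.
  rewrite cards0 r0.
  case: (boolP (e \in A)) => hea.
  + rewrite hea /= in hc. apply: negbF; apply/orP; right. lia.
  + have -> : [set e] :&: A = set0.
      apply/setP => x; rewrite in_setI in_set1 in_set0; case: (x =P e) => // ->.
      by rewrite (negbTE hea).
    rewrite cards0. apply: negbF; apply/orP; left. apply/eqP. lia.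
Qed.

Lemma mkM_dual : core_dual mkM M.
Proof.
split; first exact: mkM_core.
move=> X hX /=; rewrite /gfun.
have -> : X :&: C = X by apply/setIidPl.
have -> : X :&: A = set0.
  apply/setP => x; rewrite in_setI in_set0; case: (boolP (x \in X)) => //= hx.
  by apply/negbTE; apply: notA; apply: (subsetP hX).
rewrite cards0; lia.
Qed.
End G.

Lemma Posz_sum (I : finType) (F : I -> nat) :
  (\sum_(s : I) F s)%N%:Z = \sum_(s : I) (F s)%:Z.
Proof. rewrite -natz natr_sum; apply: eq_bigr => s _; by rewrite natz. Qed.

Lemma prefix_count (P : nat -> bool) m n :
  (\sum_(s < n) (P s && (m <= \sum_(t < s) P t)) = \sum_(t < n) P t - m)%N.
Proof.
elim: n => [|n IH]; first by rewrite !big_ord0.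
rewrite !big_ord_recr /= IH.
by case: (P n); case: leqP => h /=; lia.
Qed.

Lemma cardI_sum X S : #|X :&: S| = (\sum_(e in X) (e \in S))%N.
Proof.
rewrite -sum1_card big_mkcond /= [RHS]big_mkcond /=.
apply: eq_bigr => e _; rewrite in_setI.
by case: (e \in X); case: (e \in S).
Qed.

Lemma CK_loops (M : matroid E) e :
  ((e \in core M) + (e \in coloops M))%N = ~~ (e \in loops M).
Proof.
have H := @loop_not_coloop M e.
rewrite /core in_setC in_setU.
by move: H; case: (e \in loops M); case: (e \in coloops M) => //= /(_ isT).
Qed.

Lemma r_single (M : matroid E) e : mrank M [set e] = (~~ (e \in loops M) : nat)%:Z.
Proof.
have h1 := r1 M e. have h0 := rge0 M [set e].
rewrite inE; case: (boolP (mrank M [set e] == 0)) => /= h.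
- by apply/eqP.
- have hne : mrank M [set e] <> 0 by move=> h'; rewrite h' eqxx in h.
  lia.
Qed.

Lemma main2 (i k : nat) (hik : (i <= k)%N) (M : 'I_k -> matroid E) (rho : {set E} -> int)
  (hsum : forall X, rho X = \sum_(s < k) mrank (M s) X)
  (hsing : forall e, rho [set e] <= i%:Z) :
  exists M' : 'I_k -> matroid E,
    (forall X, idual i rho X = \sum_(s < k) mrank (M' s) X) /\
    (forall s, core_dual (M' s) (M s)).
Proof.
pose P (e : E) (t : nat) : bool := [exists s : 'I_k, (val s == t) && (e \in loops (M s))].
have hP : forall e (s : 'I_k), P e s = (e \in loops (M s)).
  move=> e s; apply/existsP/idP => [[s' /andP [/eqP hs hl]]|hl].
  - by have -> : s = s' by apply: val_inj.
  - by exists s; rewrite eqxx.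
pose A (s : 'I_k) : {set E} :=
  [set e | (e \in loops (M s)) && (k - i <= \sum_(t < s) P e t)%N].
have hA : forall s, A s \subset ~: core (M s).
  move=> s; apply/subsetP => e; rewrite /A inE => /andP [hl _].
  rewrite in_setC; apply/negP => hc.
  by rewrite (negbTE (core_notloop hc)) in hl.
exists (fun s => mkM (hA s)).
split; last by move=> s; apply: mkM_dual.
move=> X; rewrite /idual !hsum /=.
have hg : forall s, gfun (M s) (A s) X =
   (#|X :&: core (M s)| + #|X :&: coloops (M s)| + #|X :&: A s|)%N%:Z
   - (mrank (M s) setT - mrank (M s) (~: X)).
  move=> s; rewrite tdiff /gfun !PoszD; lia.
rewrite (eq_bigr _ (fun s _ => hg s)) sumrB sumrB -Posz_sum.
suff -> : (\sum_(s < k) (#|X :&: core (M s)| + #|X :&: coloops (M s)| + #|X :&: A s|) = i * #|X|)%N.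
  rewrite opprB addrA [LHS]addrAC; apply: congr2 => //; apply: congr1; apply: eq_bigr.
have hel : forall e, (\sum_(s < k) ((e \in core (M s)) + (e \in coloops (M s)) + (e \in A s)) = i)%N.
  move=> e.
  rewrite big_split /=.
  have -> : (\sum_(s < k) ((e \in core (M s)) + (e \in coloops (M s))) = \sum_(s < k) ~~ P e s)%N.
    by apply: eq_bigr => s _; rewrite CK_loops hP.
  have -> : (\sum_(s < k) (e \in A s) = \sum_(s < k) (P e s && (k - i <= \sum_(t < s) P e t)))%N.
    by apply: eq_bigr => s _; rewrite /A inE hP.
  rewrite prefix_count.
  have hk : (\sum_(s < k) ~~ P e s + \sum_(s < k) P e s = k)%N.
    rewrite -big_split /=.
    rewrite (eq_bigr (fun _ => 1%N)); last by move=> s _; case: (P e s).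
    by rewrite sum_nat_const card_ord muln1.
  have hi : (\sum_(s < k) ~~ P e s <= i)%N.
    have := hsing e; rewrite hsum.
    rewrite (eq_bigr (fun s : 'I_k => (~~ P e s : nat)%:Z)); last by move=> s _; rewrite r_single hP.
    by rewrite -Posz_sum lez_nat.
  lia.
rewrite (eq_bigr (fun s => \sum_(e in X) ((e \in core (M s)) + (e \in coloops (M s)) + (e \in A s)))%N); last first.
  by move=> s _; rewrite !cardI_sum -!big_split.
rewrite exchange_big /=.
rewrite (eq_bigr (fun _ => i)); last by move=> e _; apply: hel.
by rewrite sum_nat_const mulnC.
Qed.
End Aux.

Lemma colorable_ext (E : finType) (f g : {set E} -> int) k :
  (forall X, f X = g X) -> colorable f k -> colorable g k.
Proof. by move=> h [M hM]; exists M => X; rewrite -h. Qed.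

Lemma col_dual (E : finType) (i : nat) (rho : {set E} -> int) :
  (forall e, rho [set e] <= i%:Z) ->
  forall k, (i <= k)%N -> colorable rho k -> colorable (idual i rho) k.
Proof.
move=> hs k hik [M hM].
have [M' [h1 _]] := main2 hik hM hs.
by exists M'.
Qed.

Lemma mulrn_posz (n i : nat) : n%:Z *+ i = (i * n)%N%:Z.
Proof. by elim: i => // j IH; rewrite mulrS IH mulSn PoszD. Qed.

Theorem theorem4p1 (E : finType) (i : nat) (rho : {set E} -> int)
  (hrho : ipolymatroid i rho) :
  (forall M : 'I_i -> matroid E,
     (forall X : {set E}, rho X = \sum_(s < i) mrank (M s) X) ->
     forall X : {set E}, idual i rho X = \sum_(s < i) dual_rank (M s) X)
  /\
  (forall (k : nat), (i <= k)%N ->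
   forall M : 'I_k -> matroid E,
     (forall X : {set E}, rho X = \sum_(s < k) mrank (M s) X) ->
     exists M' : 'I_k -> matroid E,
       (forall X : {set E}, idual i rho X = \sum_(s < k) mrank (M' s) X) /\
       (forall s : 'I_k, core_dual (M' s) (M s)))
  /\
  (forall c c' : option nat,
     is_chi rho c -> is_chi (idual i rho) c' ->
     le_ext i c -> le_ext i c' -> c = c').
Proof.
case: hrho => hp hsing.
have hds : forall e, idual i rho [set e] <= i%:Z.
  move=> e; rewrite /idual cards1 muln1.
  have := prmono hp (subsetT (~: [set e])). lia.
have hdd : forall X, idual i (idual i rho) X = rho X.
  move=> X; rewrite /idual setCK setCT (pr0 hp).
  have hc := cardsC X. rewrite cardsT -hc mulnDr PoszD. lia.
split; [|split].
- move=> M hs X; rewrite /dual_rank /idual !hs.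
  rewrite big_split sumrB /= sumr_const card_ord mul1n mulrn_posz.
  by [].
- move=> k hik M hs. have := main2 hik hs hsing. case=> M' [h1 h2]; exists M'; split => [X|s]; [by rewrite h1 | exact: h2].
- move=> [a|] [b|] /= ha hb la lb.
  + case: ha => a0 [ca ma]; case: hb => b0 [cb mb].
    have h1 := mb a a0 (col_dual hsing la ca).
    have h2 := ma b b0 (colorable_ext hdd (col_dual hds lb cb)).
    by congr Some; apply/eqP; rewrite eqn_leq h1 h2.
  + case: ha => a0 [ca ma]. by case: (hb a a0 (col_dual hsing la ca)).
  + case: hb => b0 [cb mb]. by case: (ha b b0 (colorable_ext hdd (col_dual hds lb cb))).
  + by [].
Qed.
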